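(* Assume $a>1$. Let $f:\mathbb R\to\mathbb R$ be defined by $f(z)=\mu z+\lambda\ln\Big[\dfrac{\lambda(e^{\frac{a}{\lambda}(1-z)}-1)}{1-z}\Big]$ for $z\neq1$ and $f(1)=\mu+\lambda\ln a$. Then: (1) $f(z)=\mu z+\lambda\ln w(z)$ for all $z\in\mathbb R$, where $w(z)=a+\sum_{n=2}^\infty \frac{a^n(1-z)^{n-1}}{n!\,\lambda^{n-1}}$; in particular $f\in C^\infty(\mathbb R)$. (2) $f$ is convex, and the graph of $f$ intersects the graph of $k(x)=\mu x$ at exactly one point, whose abscissa $H$ satisfies $H\in(1,1+\lambda)$.
   Context: Constants $\mu\in\mathbb R$, $a>0$, $\lambda>0$ are fixed. *)

(* Defs.v *)
From Stdlib Require Export Reals Lra.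
From Coquelicot Require Export Coquelicot.
Open Scope R_scope.

Definition fdef (mu a lam : R) (z : R) : R :=
  if Req_EM_T z 1 then mu + lam * ln a
  else mu * z + lam * ln (lam * (exp (a / lam * (1 - z)) - 1) / (1 - z)).

(* k-th term (k >= 0) of the series sum_{n>=2} a^n (1-z)^(n-1) / (n! lam^(n-1)),
   reindexed with n = k + 2. *)
Definition wterm (a lam z : R) (k : nat) : R :=
  a ^ (k + 2) * (1 - z) ^ (k + 1) / (INR (Factorial.fact (k + 2)) * lam ^ (k + 1)).

Definition w (a lam z : R) : R := a + Series (wterm a lam z).

Definition convex_fun (f : R -> R) : Prop :=
  forall x y t, 0 <= t <= 1 ->
    f (t * x + (1 - t) * y) <= t * f x + (1 - t) * f y.

(* Main.v *)
Require Import Defs.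
From Stdlib Require Import Reals Lra Lia FunctionalExtensionality.
From Coquelicot Require Import Coquelicot.
Open Scope R_scope.

Definition cc (n : nat) : R := / INR (Factorial.fact (S n)).
Definition P : R -> R := PSeries cc.

Lemma fact_pos' n : 0 < INR (Factorial.fact n).
Proof. apply lt_0_INR, Factorial.lt_O_fact. Qed.

Lemma cc_rad : CV_radius cc = p_infty.
Proof.
  apply CV_radius_infinite_DAlembert.
  - intro n; unfold cc; apply Rinv_neq_0_compat; apply Rgt_not_eq, fact_pos'.
  - apply is_lim_seq_ext with (fun n => / INR (S (S n))).
    + intro n; unfold cc.
      change (Factorial.fact (S (S n))) with (S (S n) * Factorial.fact (S n))%nat.
      rewrite mult_INR.
      assert (h1 := fact_pos' (S n)).
      assert (h2 : 0 < INR (S (S n))) by (apply lt_0_INR; lia).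
      replace (/ (INR (S (S n)) * INR (Factorial.fact (S n))) / / INR (Factorial.fact (S n)))
        with (/ INR (S (S n))) by (field; lra).
      rewrite Rabs_pos_eq; [reflexivity|]. apply Rlt_le, Rinv_0_lt_compat; lra.
    + replace (Finite 0) with (Rbar_inv p_infty) by reflexivity.
      apply is_lim_seq_inv; [| discriminate].
      apply (is_lim_seq_incr_1 (fun n => INR (S n))).
      apply (is_lim_seq_incr_1 INR). apply is_lim_seq_INR.
Qed.

Lemma P_series v : is_series (fun n => cc n * v ^ n) (P v).
Proof.
  apply is_pseries_R. apply PSeries_correct. apply CV_radius_inside.
  rewrite cc_rad. exact I.
Qed.

Lemma P_exp v : v <> 0 -> P v = (exp v - 1) / v.
Proof.
  intro hv.
  assert (h := is_series_unique _ _ (P_series v)).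
  rewrite <- h. apply is_series_unique.
  assert (he := proj1 (is_pseries_R _ _ _) (is_exp_Reals v)).
  assert (h1 : is_series (fun k => / INR (Factorial.fact (S k)) * v ^ (S k)) (exp v - 1)).
  { apply (is_series_incr_1 (fun n => / INR (Factorial.fact n) * v ^ n)).
    match goal with |- is_series _ ?l => replace l with (exp v) end; [exact he|].
    unfold plus; simpl. change (Factorial.fact 0) with 1%nat. simpl. rewrite Rinv_1; ring. }
  apply (is_series_scal_l (/ v)) in h1.
  replace ((exp v - 1) / v) with (scal (/ v) (exp v - 1)).
  2:{ unfold scal; simpl; unfold mult; simpl. field. auto. }
  eapply is_series_ext; [| exact h1].
  intro n. unfold scal; simpl; unfold mult; simpl. unfold cc.
  change (Factorial.fact n + n * Factorial.fact n)%nat with (Factorial.fact (S n)).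
  assert (hf := fact_pos' (S n)). field. lra.
Qed.

Lemma cc0 : cc 0 = 1.
Proof. unfold cc. simpl. rewrite Rinv_1. reflexivity. Qed.

Lemma P0 : P 0 = 1.
Proof. unfold P. rewrite PSeries_0. apply cc0. Qed.

Lemma P_pos v : 0 < P v.
Proof.
  destruct (Req_dec v 0) as [->|hv]. rewrite P0; lra.
  rewrite P_exp by auto. assert (h := exp_ineq1 v hv).
  destruct (Rlt_or_le 0 v).
  - apply Rdiv_lt_0_compat; lra.
  - assert (v < 0) by lra. assert (0 < exp v) by apply exp_pos.
    replace ((exp v - 1) / v) with ((1 - exp v) / (- v)) by (field; auto).
    apply Rdiv_lt_0_compat; try lra.
    assert (hx : exp v < exp 0) by (apply exp_increasing; lra). rewrite exp_0 in hx. lra.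
Qed.

Lemma wterm_series a lam z : 0 < lam ->
  is_series (wterm a lam z) (a * (P (a / lam * (1 - z)) - 1)).
Proof.
  intro hl. set (v := a / lam * (1 - z)).
  assert (h1 : is_series (fun k => cc (S k) * v ^ (S k)) (P v - 1)).
  { apply (is_series_incr_1 (fun n => cc n * v ^ n)).
    match goal with |- is_series _ ?l => replace l with (P v) end; [apply P_series|].
    unfold plus; simpl. rewrite cc0. ring. }
  apply (is_series_scal_l a) in h1.
  replace (a * (P v - 1)) with (scal a (P v - 1)) by reflexivity.
  eapply is_series_ext; [| exact h1].
  intro k. unfold scal; simpl; unfold mult; simpl. unfold wterm, cc, v.
  replace (k + 2)%nat with (S (S k)) by lia.
  replace (k + 1)%nat with (S k) by lia.
  assert (hf := fact_pos' (S (S k))).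
  rewrite !Rpow_mult_distr. unfold Rdiv. rewrite Rpow_mult_distr, pow_inv.
  assert (0 < lam ^ S k) by (apply pow_lt; lra).
  assert (0 < lam ^ k) by (apply pow_lt; lra). simpl pow. field. repeat split; lra.
Qed.

Lemma w_P a lam z : 0 < lam -> ex_series (wterm a lam z) /\ w a lam z = a * P (a / lam * (1 - z)).
Proof.
  intro hl. assert (h := wterm_series a lam z hl). split.
  - eexists; eauto.
  - unfold w. rewrite (is_series_unique _ _ h). ring.
Qed.

Lemma fdef_eq mu a lam z : 0 < a -> 0 < lam ->
  fdef mu a lam z = mu * z + lam * ln (a * P (a / lam * (1 - z))).
Proof.
  intros ha hl. unfold fdef. destruct (Req_EM_T z 1) as [->|hz].
  - replace (a / lam * (1 - 1)) with 0 by ring. rewrite P0, !Rmult_1_r. reflexivity.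
  - assert (hv : a / lam * (1 - z) <> 0).
    { apply Rmult_integral_contrapositive; split.
      - apply Rgt_not_eq, Rdiv_lt_0_compat; lra.
      - intro; apply hz; lra. }
    rewrite (P_exp _ hv). f_equal. f_equal. f_equal. field.
    split; [intro; apply hz; lra | lra].
Qed.

Fixpoint Dn (n : nat) (f : R -> R) : Prop :=
  match n with
  | O => True
  | S n => (forall x, ex_derive f x) /\ Dn n (Derive f)
  end.

Lemma Dn_S n : forall f, Dn (S n) f -> Dn n f.
Proof.
  induction n; intros f h. exact I.
  destruct h as [h1 h2]. split; [exact h1|]. apply IHn. exact h2.
Qed.

Lemma Dn_exd n : forall f, Dn (S n) f -> forall x, ex_derive (Derive_n f n) x.
Proof.
  induction n; intros f h x.
  - destruct h as [h _]. exact (h x).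
  - destruct h as [h1 h2].
    assert (e : Derive_n f (S n) = Derive_n (Derive f) n).
    { apply functional_extensionality; intro y.
      replace (S n) with (n + 1)%nat by lia. rewrite <- (Derive_n_comp f n 1). reflexivity. }
    rewrite e. apply IHn. exact h2.
Qed.

Lemma Dn_ex n f : Dn n f -> forall x, ex_derive_n f n x.
Proof.
  destruct n; intros h x. exact I. simpl. apply Dn_exd. exact h.
Qed.

Lemma Dn_const n : forall k, Dn n (fun _ => k).
Proof.
  induction n; intro k. exact I. split.
  - intro; apply ex_derive_const.
  - replace (Derive (fun _ => k)) with (fun _ : R => 0). apply IHn.
    apply functional_extensionality; intro; rewrite Derive_const; reflexivity.
Qed.

Lemma Dn_id n : Dn n (fun x => x).
Proof.
  destruct n. exact I. split.
  - intro; apply ex_derive_id.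
  - replace (Derive (fun x => x)) with (fun _ : R => 1). apply Dn_const.
    apply functional_extensionality; intro; rewrite Derive_id; reflexivity.
Qed.

Lemma Dn_plus n : forall f g, Dn n f -> Dn n g -> Dn n (fun x => f x + g x).
Proof.
  induction n; intros f g hf hg. exact I.
  destruct hf as [f1 f2]; destruct hg as [g1 g2]. split.
  - intro; apply (ex_derive_plus f g); auto.
  - replace (Derive (fun x => f x + g x)) with (fun x => Derive f x + Derive g x).
    apply IHn; auto.
    apply functional_extensionality; intro; rewrite Derive_plus; auto.
Qed.

Lemma Dn_mult n : forall f g, Dn n f -> Dn n g -> Dn n (fun x => f x * g x).
Proof.
  induction n; intros f g hf hg. exact I.
  assert (hf' := Dn_S _ _ hf); assert (hg' := Dn_S _ _ hg).
  destruct hf as [f1 f2]; destruct hg as [g1 g2]. split.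
  - intro; apply ex_derive_mult; auto.
  - replace (Derive (fun x => f x * g x)) with (fun x => Derive f x * g x + f x * Derive g x).
    apply Dn_plus; apply IHn; auto.
    apply functional_extensionality; intro; rewrite Derive_mult; auto.
Qed.

Lemma Dn_comp n : forall f g, Dn n f -> Dn n g -> Dn n (fun x => f (g x)).
Proof.
  induction n; intros f g hf hg. exact I.
  assert (hf' := Dn_S _ _ hf); assert (hg' := Dn_S _ _ hg).
  destruct hf as [f1 f2]; destruct hg as [g1 g2]. split.
  - intro; apply ex_derive_comp; auto.
  - replace (Derive (fun x => f (g x))) with (fun x => Derive g x * Derive f (g x)).
    apply (Dn_mult n (Derive g) (fun x => Derive f (g x))); auto.
    apply functional_extensionality; intro x; rewrite (Derive_comp f g x); auto.
Qed.

Lemma Dn_inv n : forall g, (forall x, g x <> 0) -> Dn n g -> Dn n (fun x => / g x).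
Proof.
  induction n; intros g h0 hg. exact I.
  assert (hg' := Dn_S _ _ hg).
  destruct hg as [g1 g2]. split.
  - intro; apply ex_derive_inv; auto.
  - replace (Derive (fun x => / g x)) with (fun x => (-1 * Derive g x) * (/ g x * / g x)).
    apply (Dn_mult n (fun x => -1 * Derive g x) (fun x => / g x * / g x)).
    + apply (Dn_mult n (fun _ => -1) (Derive g)); auto. apply Dn_const.
    + apply (Dn_mult n (fun x => / g x) (fun x => / g x)); auto.
    + apply functional_extensionality; intro x; rewrite Derive_inv; auto.
      specialize (h0 x). field. auto.
Qed.

Lemma Dn_ln n : forall g, (forall x, 0 < g x) -> Dn n g -> Dn n (fun x => ln (g x)).
Proof.
  destruct n; intros g h0 hg. exact I.
  assert (hg' := Dn_S _ _ hg).
  assert (hd : forall x, is_derive (fun x => ln (g x)) x (Derive g x * / g x)).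
  { intro x. destruct hg as [g1 _].
    apply (is_derive_comp ln g x (/ g x) (Derive g x)).
    apply is_derive_ln; auto. apply Derive_correct; auto. }
  split.
  - intro x; eexists; apply hd.
  - replace (Derive (fun x => ln (g x))) with (fun x => Derive g x * / g x).
    + destruct hg as [_ g2].
      apply (Dn_mult n (Derive g) (fun x => / g x)); auto.
      apply Dn_inv; auto. intro x; specialize (h0 x); lra.
    + apply functional_extensionality; intro x. symmetry. apply is_derive_unique, hd.
Qed.

Lemma Dn_PSeries n : forall b, CV_radius b = p_infty -> Dn n (PSeries b).
Proof.
  induction n; intros b hb. exact I. split.
  - intro x; apply ex_derive_PSeries; rewrite hb; exact I.
  - replace (Derive (PSeries b)) with (PSeries (PS_derive b)).
    + apply IHn. rewrite CV_radius_derive; auto.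
    + apply functional_extensionality; intro x. symmetry. apply Derive_PSeries. rewrite hb; exact I.
Qed.

Lemma fdef_smooth mu a lam n : 0 < a -> 0 < lam -> Dn n (fdef mu a lam).
Proof.
  intros ha hl.
  replace (fdef mu a lam) with
    (fun z => (fun _ => mu) z * (fun x => x) z + (fun _ => lam) z *
       (fun z => ln ((fun _ => a) z * P ((fun _ => a / lam) z * ((fun _ => 1) z + (fun _ => -1) z * (fun x => x) z)))) z).
  2:{ apply functional_extensionality; intro z. rewrite fdef_eq by auto.
      replace (1 + -1 * z) with (1 - z) by ring. reflexivity. }
  apply Dn_plus; apply Dn_mult; try apply Dn_const; try apply Dn_id.
  apply Dn_ln.
  - intro x. apply Rmult_lt_0_compat; auto. apply P_pos.
  - apply Dn_mult. apply Dn_const.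
    apply (Dn_comp n P). apply Dn_PSeries, cc_rad.
    apply Dn_mult. apply Dn_const. apply Dn_plus. apply Dn_const.
    apply Dn_mult. apply Dn_const. apply Dn_id.
Qed.

Lemma mvt' (f f' : R -> R) x y : x <= y -> (forall t, is_derive f t (f' t)) ->
  exists c, x <= c <= y /\ f y - f x = f' c * (y - x).
Proof.
  intros hxy hd.
  destruct (MVT_gen f x y f') as [c [hc e]].
  - intros; apply hd.
  - intros t _. apply continuity_pt_filterlim. apply (ex_derive_continuous (K := R_AbsRing) (V := R_NormedModule) f t). eexists; apply hd.
  - exists c. rewrite Rmin_left, Rmax_right in hc by lra. auto.
Qed.

Lemma mono_le (f f' : R -> R) : (forall t, is_derive f t (f' t)) -> (forall t, 0 <= f' t) ->
  forall x y, x <= y -> f x <= f y.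
Proof.
  intros hd hp x y hxy. destruct (mvt' f f' x y hxy hd) as [c [_ e]].
  assert (0 <= f' c * (y - x)) by (apply Rmult_le_pos; auto; lra). lra.
Qed.

Lemma mono_lt (f f' : R -> R) : (forall t, is_derive f t (f' t)) -> (forall t, 0 < f' t) ->
  forall x y, x < y -> f x < f y.
Proof.
  intros hd hp x y hxy. destruct (mvt' f f' x y (Rlt_le _ _ hxy) hd) as [c [_ e]].
  assert (0 < f' c * (y - x)) by (apply Rmult_lt_0_compat; auto; lra). lra.
Qed.

Lemma convex_aux (f f' : R -> R) : (forall t, is_derive f t (f' t)) ->
  (forall x y, x <= y -> f' x <= f' y) ->
  forall x y t, x <= y -> 0 <= t <= 1 ->
    f (t * x + (1 - t) * y) <= t * f x + (1 - t) * f y.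
Proof.
  intros hd hm x y t hxy ht. set (p := t * x + (1 - t) * y).
  assert (h1 : x <= p) by (unfold p; nra).
  assert (h2 : p <= y) by (unfold p; nra).
  destruct (mvt' f f' x p h1 hd) as [c1 [hc1 e1]].
  destruct (mvt' f f' p y h2 hd) as [c2 [hc2 e2]].
  assert (hm12 : f' c1 <= f' c2) by (apply hm; lra).
  assert (ep1 : p - x = (1 - t) * (y - x)) by (unfold p; ring).
  assert (ep2 : y - p = t * (y - x)) by (unfold p; ring).
  rewrite ep1 in e1; rewrite ep2 in e2.
  assert (0 <= t * (1 - t) * (y - x)) by (apply Rmult_le_pos; nra).
  assert (t * (f p - f x) <= (1 - t) * (f y - f p)).
  { rewrite e1, e2. replace (t * (f' c1 * ((1 - t) * (y - x)))) with (f' c1 * (t * (1 - t) * (y - x))) by ring.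
    replace ((1 - t) * (f' c2 * (t * (y - x)))) with (f' c2 * (t * (1 - t) * (y - x))) by ring.
    apply Rmult_le_compat_r; auto. }
  nra.
Qed.

Lemma convex_of_mono (f f' : R -> R) : (forall t, is_derive f t (f' t)) ->
  (forall x y, x <= y -> f' x <= f' y) -> convex_fun f.
Proof.
  intros hd hm x y t ht. destruct (Rle_or_lt x y).
  - apply (convex_aux f f'); auto.
  - replace (t * x + (1 - t) * y) with ((1 - t) * y + (1 - (1 - t)) * x) by ring.
    replace (t * f x + (1 - t) * f y) with ((1 - t) * f y + (1 - (1 - t)) * f x) by ring.
    apply (convex_aux f f'); auto; lra.
Qed.

Definition Q (v : R) := (exp v - 1) / v.
Definition Q1 (v : R) := (v * exp v - exp v + 1) / v ^ 2.
Definition Q2 (v : R) := (v ^ 2 * exp v - 2 * v * exp v + 2 * exp v - 2) / v ^ 3.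

Lemma Q_der v : v <> 0 -> is_derive Q v (Q1 v).
Proof. intro hv. unfold Q, Q1. auto_derive. auto. field. auto. Qed.

Lemma Q1_der v : v <> 0 -> is_derive Q1 v (Q2 v).
Proof. intro hv. unfold Q1, Q2. auto_derive. auto. field. auto. Qed.

Lemma loc_ne v : v <> 0 -> locally v (fun t => t <> 0).
Proof.
  intro hv. exists (mkposreal _ (Rabs_pos_lt v hv)). intros t ht.
  change (Rabs (t - v) < Rabs v) in ht. intro e. subst t.
  rewrite Rminus_0_l, Rabs_Ropp in ht. lra.
Qed.

Definition P1 := Derive P.
Definition P2 := Derive P1.

Lemma P_ex v : ex_derive P v.
Proof. apply ex_derive_PSeries. rewrite cc_rad. exact I. Qed.

Lemma P1_eq : P1 = PSeries (PS_derive cc).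
Proof.
  apply functional_extensionality; intro x. apply Derive_PSeries. rewrite cc_rad; exact I.
Qed.

Lemma P1_ex v : ex_derive P1 v.
Proof. rewrite P1_eq. apply ex_derive_PSeries. rewrite CV_radius_derive, cc_rad. exact I. Qed.

Lemma P2_eq : P2 = PSeries (PS_derive (PS_derive cc)).
Proof.
  unfold P2. rewrite P1_eq.
  apply functional_extensionality; intro x. apply Derive_PSeries. rewrite CV_radius_derive, cc_rad; exact I.
Qed.

Lemma P1_0 : P1 0 = 1 / 2.
Proof.
  rewrite P1_eq, PSeries_0. unfold PS_derive, cc. simpl. field.
Qed.

Lemma P2_0 : P2 0 = 1 / 3.
Proof.
  rewrite P2_eq, PSeries_0. unfold PS_derive, cc. simpl. field.
Qed.

Lemma P1_Q1 v : v <> 0 -> P1 v = Q1 v.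
Proof.
  intro hv. unfold P1. rewrite (Derive_ext_loc P Q).
  - apply is_derive_unique, Q_der, hv.
  - eapply filter_imp; [| apply (loc_ne v hv)]. intros t ht. apply P_exp, ht.
Qed.

Lemma P2_Q2 v : v <> 0 -> P2 v = Q2 v.
Proof.
  intro hv. unfold P2. rewrite (Derive_ext_loc P1 Q1).
  - apply is_derive_unique, Q1_der, hv.
  - eapply filter_imp; [| apply (loc_ne v hv)]. intros t ht. apply P1_Q1, ht.
Qed.

Lemma exp_inv_mul v : exp v * exp (- v) = 1.
Proof. rewrite <- exp_plus. replace (v + - v) with 0 by ring. apply exp_0. Qed.

Lemma P1_pos v : 0 < P1 v.
Proof.
  destruct (Req_dec v 0) as [->|hv]. rewrite P1_0; lra.
  rewrite P1_Q1 by auto. unfold Q1.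
  assert (h1 := exp_ineq1 (- v) ltac:(intro; apply hv; lra)).
  assert (h2 := exp_inv_mul v). assert (h3 := exp_pos v).
  assert (0 < v ^ 2) by (rewrite <- Rsqr_pow2; apply Rsqr_pos_lt; auto).
  apply Rdiv_lt_0_compat; auto. nra.
Qed.

Lemma sinh_ge s : 0 <= s -> 0 <= exp s - exp (- s) - 2 * s.
Proof.
  intro hs.
  assert (h := mono_le (fun s => exp s - exp (- s) - 2 * s) (fun s => exp s + exp (- s) - 2)).
  assert (e0 : exp 0 - exp (- 0) - 2 * 0 = 0).
  { rewrite Ropp_0, exp_0. ring. }
  rewrite <- e0. apply h; auto.
  - intro t. auto_derive. auto. ring.
  - intro t. assert (h2 := exp_inv_mul t). assert (h3 := exp_pos t). assert (h4 := exp_pos (- t)).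
    assert (hq : exp t * (exp t + exp (- t) - 2) = (exp t - 1) ^ 2).
    { rewrite Rmult_minus_distr_l, Rmult_plus_distr_l, h2. ring. }
    assert (0 <= (exp t - 1) ^ 2) by apply pow2_ge_0.
    destruct (Rle_or_lt 0 (exp t + exp (- t) - 2)); auto. nra.
Qed.

Lemma key v : 0 <= (exp v - 1) ^ 2 - v ^ 2 * exp v.
Proof.
  set (s := v / 2). set (E := exp s).
  assert (ev : exp v = E * E) by (unfold E, s; rewrite <- exp_plus; f_equal; field).
  assert (hi : exp s * exp (- s) = 1) by apply exp_inv_mul.
  assert (hE : 0 < E) by apply exp_pos.
  assert (vs : v = 2 * s) by (unfold s; field).
  rewrite ev, vs. fold E in hi.
  set (F := exp (- s)) in *.
  replace ((E * E - 1) ^ 2 - (2 * s) ^ 2 * (E * E)) with (E * E * ((E - F - 2 * s) * (E - F + 2 * s))).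
  2:{ replace (E * E - 1) with (E * (E - F)) by (rewrite <- hi; ring). ring. }
  apply Rmult_le_pos; [nra|].
  destruct (Rle_or_lt 0 s) as [hs|hs].
  - assert (h := sinh_ge s hs). fold E F in h. nra.
  - assert (h := sinh_ge (- s) ltac:(lra)). rewrite Ropp_involutive in h. fold E F in h. nra.
Qed.

Lemma P_logconv v : P1 v * P1 v <= P2 v * P v.
Proof.
  destruct (Req_dec v 0) as [->|hv]. rewrite P1_0, P2_0, P0; lra.
  rewrite P1_Q1, P2_Q2, P_exp by auto.
  assert (e : Q2 v * ((exp v - 1) / v) - Q1 v * Q1 v = ((exp v - 1) ^ 2 - v ^ 2 * exp v) / v ^ 4).
  { unfold Q1, Q2. field. auto. }
  assert (0 <= ((exp v - 1) ^ 2 - v ^ 2 * exp v) / v ^ 4).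
  { apply Rdiv_le_0_compat. apply key.
    replace (v ^ 4) with ((v ^ 2) ^ 2) by ring. assert (0 < v ^ 2) by (rewrite <- Rsqr_pow2; apply Rsqr_pos_lt; auto). nra. }
  lra.
Qed.

Lemma P_der v : is_derive P v (P1 v).
Proof. apply Derive_correct, P_ex. Qed.

Lemma P1_der v : is_derive P1 v (P2 v).
Proof. apply Derive_correct, P1_ex. Qed.

Definition L (v : R) := ln (P v).

Lemma L_der v : is_derive L v (P1 v / P v).
Proof.
  unfold L. replace (P1 v / P v) with (scal (P1 v) (/ P v)) by reflexivity.
  apply (is_derive_comp ln P). apply is_derive_ln, P_pos. apply P_der.
Qed.

Lemma L1_der v : is_derive (fun v => P1 v / P v) v ((P2 v * P v - P1 v * P1 v) / P v ^ 2).
Proof.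
  apply is_derive_div. apply P1_der. apply P_der. apply Rgt_not_eq, P_pos.
Qed.

Lemma L_convex : convex_fun L.
Proof.
  apply (convex_of_mono L (fun v => P1 v / P v)). apply L_der.
  apply (mono_le _ _ L1_der). intro t.
  apply Rdiv_le_0_compat. assert (h := P_logconv t). lra.
  apply pow_lt, P_pos.
Qed.

Theorem proposition3p1 (mu a lam : R) (ha : 1 < a) (hlam : 0 < lam) :
  (forall z : R, ex_series (wterm a lam z) /\
     fdef mu a lam z = mu * z + lam * ln (w a lam z)) /\
  (forall (n : nat) (z : R), ex_derive_n (fdef mu a lam) n z) /\
  convex_fun (fdef mu a lam) /\
  (exists H : R, (forall x : R, fdef mu a lam x = mu * x <-> x = H) /\
     1 < H < 1 + lam).
Proof.
  assert (ha0 : 0 < a) by lra.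
  assert (fe : forall z, fdef mu a lam z = mu * z + lam * ln a + lam * L (a / lam * (1 - z))).
  { intro z. rewrite fdef_eq by auto. unfold L. rewrite ln_mult; auto. ring. apply P_pos. }
  split; [|split; [|split]].
  - intro z. destruct (w_P a lam z hlam) as [h1 h2]. split; auto.
    rewrite h2. apply fdef_eq; auto.
  - intros n z. apply Dn_ex. apply fdef_smooth; auto.
  - intros x y t ht. rewrite !fe.
    replace (a / lam * (1 - (t * x + (1 - t) * y))) with
      (t * (a / lam * (1 - x)) + (1 - t) * (a / lam * (1 - y))) by ring.
    assert (h := L_convex (a / lam * (1 - x)) (a / lam * (1 - y)) t ht).
    assert (h' := Rmult_le_compat_l lam _ _ (Rlt_le _ _ hlam) h). nra.
  - assert (hc : continuity P).
    { intro t. apply continuity_pt_filterlim.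
      apply (ex_derive_continuous (K := R_AbsRing) (V := R_NormedModule) P t). apply P_ex. }
    assert (hPa : P (- a) < 1 / a).
    { rewrite P_exp by lra. assert (0 < exp (- a)) by apply exp_pos.
      replace ((exp (- a) - 1) / - a) with ((1 - exp (- a)) / a) by (field; lra).
      apply Rmult_lt_compat_r. apply Rinv_0_lt_compat; lra. lra. }
    assert (hP0 : 1 / a < P 0).
    { rewrite P0. apply (Rmult_lt_reg_l a); auto. field_simplify; lra. }
    destruct (IVT_gen P (- a) 0 (1 / a) hc) as [v [hv ev]].
    { rewrite Rmin_left, Rmax_right by lra. lra. }
    rewrite Rmin_left, Rmax_right in hv by lra.
    assert (hv1 : v <> - a) by (intro; subst v; lra).
    assert (hv2 : v <> 0) by (intro; subst v; lra).
    assert (hinj : forall x y, P x = P y -> x = y).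
    { intros x y e. destruct (Rtotal_order x y) as [h|[h|h]]; auto.
      - assert (h' := mono_lt P P1 P_der P1_pos x y h). lra.
      - assert (h' := mono_lt P P1 P_der P1_pos y x h). lra. }
    exists (1 - lam * v / a). split.
    + intro x. rewrite fdef_eq by auto. split.
      * intro e. assert (e1 : ln (a * P (a / lam * (1 - x))) = 0).
        { apply (Rmult_eq_reg_l lam); [|lra]. lra. }
        assert (e2 : a * P (a / lam * (1 - x)) = 1).
        { rewrite <- (exp_ln (a * P (a / lam * (1 - x)))), e1, exp_0; auto.
          apply Rmult_lt_0_compat; auto; apply P_pos. }
        assert (e3 : P (a / lam * (1 - x)) = P v).
        { rewrite ev. apply (Rmult_eq_reg_l a); [|lra]. rewrite e2. field. lra. }
        apply hinj in e3. apply (Rmult_eq_compat_l (lam / a)) in e3.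
        replace (lam / a * (a / lam * (1 - x))) with (1 - x) in e3 by (field; lra). lra.
      * intro e. subst x.
        replace (a / lam * (1 - (1 - lam * v / a))) with v by (field; lra).
        rewrite ev. replace (a * (1 / a)) with 1 by (field; lra). rewrite ln_1. ring.
    + assert (0 < lam * (- v) / a).
      { apply Rdiv_lt_0_compat; auto. apply Rmult_lt_0_compat; lra. }
      assert (lam * (- v) / a < lam).
      { apply (Rmult_lt_reg_l a); auto. field_simplify; try lra. nra. }
      replace (lam * v / a) with (- (lam * (- v) / a)) by (field; lra). lra.
Qed.
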